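(* Let $a>0$. The map $\Lambda_a$ maps $\mathcal D[0,\infty)$ into $\mathcal D[0,\infty)$, $\mathcal C[0,\infty)$ into $\mathcal C[0,\infty)$, $\mathcal{BV}[0,\infty)$ into $\mathcal{BV}[0,\infty)$, and absolutely continuous functions (on every compact interval) to absolutely continuous functions.
   Context: $\mathcal D[0,\infty)$ is the space of right-continuous functions $[0,\infty)\to\mathbb R$ with left limits; $\mathcal C[0,\infty)$ and $\mathcal{BV}[0,\infty)$ are its subsets of continuous functions and of functions of bounded variation on every compact interval. Notation: $x^+=\max(x,0)$, $x\wedge y=\min(x,y)$. For $a>0$ and a function $\phi:[0,\infty)\to\mathbb R$, $\Lambda_a(\phi)(t)=\phi(t)-\sup_{s\in[0,t]}\big[(\phi(s)-a)^+\wedge\inf_{u\in[s,t]}\phi(u)\big]$. *)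

(* Defs.v *)
From Stdlib Require Import Reals Lra ClassicalEpsilon.
Open Scope R_scope.

(* Supremum of a set of reals: the least upper bound if it exists
   (chosen by classical epsilon); an arbitrary value otherwise. *)
Definition sup_set (E : R -> Prop) : R :=
  epsilon (inhabits 0) (fun l => is_lub E l).

Definition inf_set (E : R -> Prop) : R :=
  - sup_set (fun x => E (- x)).

Definition Lambda (a : R) (phi : R -> R) (t : R) : R :=
  phi t - sup_set (fun y => exists s, 0 <= s <= t /\
     y = Rmin (Rmax (phi s - a) 0) (inf_set (fun z => exists u, s <= u <= t /\ z = phi u))).

Definition cadlag (f : R -> R) : Prop :=
  (forall t, 0 <= t -> forall eps, eps > 0 -> exists delta, delta > 0 /\
      forall s, t <= s < t + delta -> Rabs (f s - f t) < eps) /\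
  (forall t, 0 < t -> exists l, forall eps, eps > 0 -> exists delta, delta > 0 /\
      forall s, t - delta < s < t -> Rabs (f s - l) < eps).

Definition cont0 (f : R -> R) : Prop :=
  forall t, 0 <= t -> forall eps, eps > 0 -> exists delta, delta > 0 /\
    forall s, 0 <= s -> Rabs (s - t) < delta -> Rabs (f s - f t) < eps.

Fixpoint var_sum (f : R -> R) (x : nat -> R) (n : nat) : R :=
  match n with
  | O => 0
  | S k => var_sum f x k + Rabs (f (x (S k)) - f (x k))
  end.

Definition bv_loc (f : R -> R) : Prop :=
  forall T, 0 <= T -> exists M, forall (x : nat -> R) (n : nat),
    0 <= x O -> (forall i, (i < n)%nat -> x i <= x (S i)) -> x n <= T ->
    var_sum f x n <= M.

Definition BV0 (f : R -> R) : Prop := cadlag f /\ bv_loc f.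

Fixpoint fsum (g : nat -> R) (n : nat) : R :=
  match n with
  | O => 0
  | S k => fsum g k + g k
  end.

Definition ac_loc (f : R -> R) : Prop :=
  forall T, 0 <= T -> forall eps, eps > 0 -> exists delta, delta > 0 /\
    forall (a b : nat -> R) (n : nat),
      (forall i, (i < n)%nat -> 0 <= a i /\ a i <= b i /\ b i <= T) ->
      (forall i, (S i < n)%nat -> b i <= a (S i)) ->
      fsum (fun i => b i - a i) n < delta ->
      fsum (fun i => Rabs (f (b i) - f (a i))) n < eps.

(* Main.v *)
Require Import Defs.
From Stdlib Require Import Reals Lra Lia ClassicalEpsilon.
Open Scope R_scope.

Ltac rabs := unfold Rabs in *; repeat match goal with
  | |- context [Rcase_abs ?x] => destruct (Rcase_abs x)
  | H : context [Rcase_abs ?x] |- _ => destruct (Rcase_abs x)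
  end; try lra.

Lemma sup_lub (E : R -> Prop) : (exists x, E x) -> (exists M, forall x, E x -> x <= M) ->
  is_lub E (sup_set E).
Proof.
  intros Hne [M HM].
  destruct (completeness E (ex_intro _ M HM) Hne) as [m Hm].
  unfold sup_set. apply epsilon_spec. exists m; exact Hm.
Qed.

Lemma sup_ub (E : R -> Prop) x M : (forall y, E y -> y <= M) -> E x -> x <= sup_set E.
Proof. intros HM Hx. destruct (sup_lub E (ex_intro _ x Hx) (ex_intro _ M HM)) as [H _]. apply H, Hx. Qed.

Lemma sup_least (E : R -> Prop) b : (exists x, E x) -> (forall y, E y -> y <= b) -> sup_set E <= b.
Proof. intros Hne Hb. destruct (sup_lub E Hne (ex_intro _ b Hb)) as [_ H]. apply H. exact Hb. Qed.

Lemma inf_lb (E : R -> Prop) x m : (forall y, E y -> m <= y) -> E x -> inf_set E <= x.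
Proof.
  intros Hm Hx. unfold inf_set.
  assert (- x <= sup_set (fun z => E (- z))).
  { apply (sup_ub _ _ (- m)). intros y Hy. specialize (Hm _ Hy). lra.
    rewrite Ropp_involutive; exact Hx. }
  lra.
Qed.

Lemma inf_ge (E : R -> Prop) b : (exists x, E x) -> (forall y, E y -> b <= y) -> b <= inf_set E.
Proof.
  intros [x Hx] Hb. unfold inf_set.
  assert (sup_set (fun z => E (- z)) <= - b).
  { apply sup_least. exists (- x). rewrite Ropp_involutive; exact Hx.
    intros y Hy. specialize (Hb _ Hy). lra. }
  lra.
Qed.

Definition Iset (phi : R -> R) s t := fun z => exists u, s <= u <= t /\ z = phi u.
Definition Inf phi s t := inf_set (Iset phi s t).
Definition gg a phi t s := Rmin (Rmax (phi s - a) 0) (Inf phi s t).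
Definition Xset a phi t := fun y => exists s, 0 <= s <= t /\ y = gg a phi t s.
Definition Xi a phi t := sup_set (Xset a phi t).

Lemma Lambda_eq a phi t : Lambda a phi t = phi t - Xi a phi t.
Proof. reflexivity. Qed.

Definition bnd (phi : R -> R) T M := forall u, 0 <= u <= T -> Rabs (phi u) <= M.

Lemma Inf_lb phi T M s t u : bnd phi T M -> 0 <= s -> t <= T -> s <= u <= t -> Inf phi s t <= phi u.
Proof.
  intros HB Hs Ht Hu. unfold Inf. apply (inf_lb _ _ (- M)).
  intros y [v [Hv ->]]. specialize (HB v ltac:(lra)). rabs.
  exists u; split; [lra|reflexivity].
Qed.

Lemma Inf_ge phi s t b : s <= t -> (forall u, s <= u <= t -> b <= phi u) -> b <= Inf phi s t.
Proof.
  intros Hst H. unfold Inf. apply inf_ge. exists (phi s), s; split; [lra|reflexivity].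
  intros y [v [Hv ->]]. apply H; lra.
Qed.

Lemma Xset_bnd a phi T M t y : 0 < a -> bnd phi T M -> 0 <= T -> t <= T -> Xset a phi t y -> y <= M.
Proof.
  intros ha HB HT Ht [s [Hs ->]]. unfold gg.
  pose proof (HB 0 ltac:(lra)). pose proof (HB s ltac:(lra)).
  pose proof (Rmin_l (Rmax (phi s - a) 0) (Inf phi s t)).
  unfold Rmax in *. destruct (Rle_dec (phi s - a) 0); rabs.
Qed.

Lemma Xi_ub a phi T M t s : 0 < a -> bnd phi T M -> 0 <= T -> t <= T -> 0 <= s <= t ->
  gg a phi t s <= Xi a phi t.
Proof.
  intros. unfold Xi. apply (sup_ub _ _ M). intros; eapply Xset_bnd; eauto.
  exists s; split; [lra|reflexivity].
Qed.

Lemma Xi_least a phi t b : 0 <= t -> (forall s, 0 <= s <= t -> gg a phi t s <= b) -> Xi a phi t <= b.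
Proof.
  intros Ht H. unfold Xi. apply sup_least. exists (gg a phi t 0), 0; split; [lra|reflexivity].
  intros y [s [Hs ->]]. apply H; lra.
Qed.

Lemma min_lip A B A' B' d : A <= A' + d -> B <= B' + d -> Rmin A B <= Rmin A' B' + d.
Proof. intros. unfold Rmin; repeat destruct Rle_dec; lra. Qed.
Lemma max_lip A A' d : 0 <= d -> A <= A' + d -> Rmax A 0 <= Rmax A' 0 + d.
Proof. intros. unfold Rmax; repeat destruct Rle_dec; lra. Qed.

Lemma keyL a phi T M t t' d : 0 < a -> bnd phi T M -> 0 <= t -> t <= t' -> t' <= T ->
  (forall u, t <= u <= t' -> Rabs (phi u - phi t) <= d) ->
  Rabs (Xi a phi t' - Xi a phi t) <= d.
Proof.
  intros ha HB Ht Htt HtT Hd.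
  assert (d0 : 0 <= d). { specialize (Hd t ltac:(lra)). rewrite Rminus_diag, Rabs_R0 in Hd. lra. }
  assert (HA : Xi a phi t' <= Xi a phi t + d).
  { apply Xi_least; [lra|]. intros s Hs.
    destruct (Rle_dec s t) as [Hst|Hst].
    - assert (Inf phi s t' <= Inf phi s t).
      { apply Inf_ge; [lra|]. intros u Hu. eapply Inf_lb; eauto; lra. }
      pose proof (Xi_ub a phi T M t s ha HB ltac:(lra) ltac:(lra) ltac:(lra)).
      unfold gg in *. assert (Rmin (Rmax (phi s - a) 0) (Inf phi s t') <=
        Rmin (Rmax (phi s - a) 0) (Inf phi s t) + 0) by (apply min_lip; lra). lra.
    - pose proof (Xi_ub a phi T M t t ha HB ltac:(lra) ltac:(lra) ltac:(lra)).
      assert (Inf phi t t = phi t).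
      { apply Rle_antisym. eapply Inf_lb; eauto; lra. apply Inf_ge; [lra|].
        intros u Hu. replace u with t by lra. lra. }
      assert (Inf phi s t' <= phi t') by (eapply Inf_lb; eauto; lra).
      pose proof (Hd s ltac:(lra)). pose proof (Hd t' ltac:(lra)).
      unfold gg in *. rewrite H0 in H.
      assert (Rmin (Rmax (phi s - a) 0) (Inf phi s t') <= Rmin (Rmax (phi t - a) 0) (phi t) + d).
      { apply min_lip; [apply max_lip|]; rabs. }
      lra. }
  assert (HB2 : Xi a phi t <= Xi a phi t' + d).
  { apply Xi_least; [lra|]. intros s Hs.
    pose proof (Xi_ub a phi T M t' s ha HB ltac:(lra) ltac:(lra) ltac:(lra)).
    assert (Inf phi s t - d <= Inf phi s t').
    { apply Inf_ge; [lra|]. intros u Hu. destruct (Rle_dec u t).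
      - assert (Inf phi s t <= phi u) by (eapply Inf_lb; eauto; lra). lra.
      - assert (Inf phi s t <= phi t) by (eapply Inf_lb; eauto; lra).
        pose proof (Hd u ltac:(lra)). rabs. }
    unfold gg in *.
    assert (Rmin (Rmax (phi s - a) 0) (Inf phi s t) <= Rmin (Rmax (phi s - a) 0) (Inf phi s t') + d)
      by (apply min_lip; lra). lra. }
  rabs.
Qed.

Lemma cadlag_bnd phi T : cadlag phi -> 0 <= T -> exists M, bnd phi T M.
Proof.
  intros [Hr Hl] HT.
  set (E := fun x => 0 <= x <= T /\ exists M, bnd phi x M).
  assert (E0 : E 0). { split; [lra|]. exists (Rabs (phi 0)). intros u Hu. replace u with 0 by lra; lra. }
  destruct (sup_lub E (ex_intro _ 0 E0) (ex_intro _ T (fun x H => proj2 (proj1 H)))) as [Hub Hle].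
  set (c := sup_set E) in *.
  assert (c0 : 0 <= c) by (apply Hub; exact E0).
  assert (cT : c <= T) by (apply Hle; intros x Hx; apply Hx).
  assert (HC : exists M, bnd phi c M).
  { destruct (Req_dec c 0) as [e|ne].
    - rewrite e. exact (proj2 E0).
    - destruct (Hl c ltac:(lra)) as [l Hlim]. destruct (Hlim 1 ltac:(lra)) as [d [d0 Hd]].
      assert (exists x, E x /\ c - d < x).
      { apply NNPP; intro Hn. assert (c <= c - d); [|lra]. apply Hle. intros x Hx.
        apply Rnot_lt_le. intro Hlt. apply Hn. exists x; auto. }
      destruct H as [x [[Hx [Mx HMx]] Hxc]].
      assert (x <= c) by (apply Hub; split; [exact Hx|exists Mx; exact HMx]).
      exists (Rmax (Rmax Mx (Rabs l + 1)) (Rabs (phi c))). intros u Hu.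
      destruct (Rle_dec u x). { pose proof (HMx u ltac:(lra)).
        pose proof (Rmax_l Mx (Rabs l + 1)). pose proof (Rmax_l (Rmax Mx (Rabs l + 1)) (Rabs (phi c))). lra. }
      destruct (Req_dec u c). { subst. apply Rmax_r. }
      pose proof (Hd u ltac:(lra)).
      assert (Rabs (phi u) <= Rabs l + 1) by rabs.
      pose proof (Rmax_r Mx (Rabs l + 1)). pose proof (Rmax_l (Rmax Mx (Rabs l + 1)) (Rabs (phi c))). lra. }
  destruct (Req_dec c T) as [e|ne]. { rewrite <- e; exact HC. }
  exfalso. destruct HC as [Mc HMc].
  destruct (Hr c c0 1 ltac:(lra)) as [d [d0 Hd]].
  set (c' := Rmin (c + d / 2) T).
  assert (c < c'). { unfold c', Rmin; destruct Rle_dec; lra. }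
  assert (c' <= c + d/2 /\ c' <= T) by (unfold c'; split; [apply Rmin_l|apply Rmin_r]).
  assert (E c').
  { split; [lra|]. exists (Rmax Mc (Rabs (phi c) + 1)). intros u Hu.
    destruct (Rle_dec u c). { pose proof (HMc u ltac:(lra)). pose proof (Rmax_l Mc (Rabs (phi c) + 1)). lra. }
    pose proof (Hd u ltac:(lra)). assert (Rabs (phi u) <= Rabs (phi c) + 1) by rabs.
    pose proof (Rmax_r Mc (Rabs (phi c) + 1)). lra. }
  pose proof (Hub _ H1). lra.
Qed.

Lemma pt_in t d N n : / INR N < d -> (0 < N)%nat -> (n >= N)%nat ->
  t - d < t - / (INR n + 1) < t.
Proof.
  intros HN N0 Hn.
  assert (0 < INR N) by (apply lt_0_INR; lia).
  assert (INR N <= INR n + 1) by (apply le_INR in Hn; lra).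
  assert (/ (INR n + 1) <= / INR N) by (apply Rinv_le_contravar; lra).
  assert (0 < / (INR n + 1)) by (apply Rinv_0_lt_compat; pose proof (pos_INR n); lra).
  lra.
Qed.

Lemma left_cauchy (f : R -> R) t :
  (forall eps, eps > 0 -> exists d, d > 0 /\ forall x y, t - d < x < t -> t - d < y < t -> Rabs (f x - f y) < eps) ->
  exists l, forall eps, eps > 0 -> exists d, d > 0 /\ forall s, t - d < s < t -> Rabs (f s - l) < eps.
Proof.
  intros H.
  set (U := fun n : nat => f (t - / (INR n + 1))).
  assert (HC : Cauchy_crit U).
  { intros eps Heps. destruct (H eps Heps) as [d [d0 Hd]].
    destruct (archimed_cor1 d d0) as [N [HN N0]]. exists N. intros n m Hn Hm.
    unfold Rdist, U. apply Hd; eapply pt_in; eauto. }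
  destruct (R_complete U HC) as [l Hl]. exists l.
  intros eps Heps. destruct (H (eps/2) ltac:(lra)) as [d [d0 Hd]].
  destruct (Hl (eps/2) ltac:(lra)) as [N1 HN1].
  destruct (archimed_cor1 d d0) as [N2 [HN2 N20]].
  exists d; split; [lra|]. intros s Hs.
  pose proof (HN1 (Nat.max N1 N2) ltac:(lia)). unfold Rdist, U in H0.
  pose proof (pt_in t d N2 (Nat.max N1 N2) HN2 N20 ltac:(lia)).
  pose proof (Hd s _ Hs H1). rabs.
Qed.

Lemma Lam_cadlag a phi : 0 < a -> cadlag phi -> cadlag (Lambda a phi).
Proof.
  intros ha Hc. pose proof Hc as [Hr Hl]. split.
  - intros t Ht eps Heps. destruct (Hr t Ht (eps/2) ltac:(lra)) as [d [d0 Hd]].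
    destruct (cadlag_bnd phi (t + d) Hc ltac:(lra)) as [M HM].
    exists d; split; [lra|]. intros s Hs. rewrite !Lambda_eq.
    assert (Rabs (Xi a phi s - Xi a phi t) <= eps/2).
    { eapply keyL; eauto; try lra. intros u Hu. left. apply Hd; lra. }
    pose proof (Hd s Hs). rabs.
  - intros t Ht. destruct (Hl t Ht) as [l Hlim]. apply left_cauchy.
    intros eps Heps. destruct (Hlim (eps/4) ltac:(lra)) as [d0 [d00 Hd]].
    destruct (cadlag_bnd phi t Hc ltac:(lra)) as [M HM].
    exists (Rmin d0 t). split. { unfold Rmin; destruct Rle_dec; lra. }
    assert (Rmin d0 t <= d0 /\ Rmin d0 t <= t) by (split; [apply Rmin_l|apply Rmin_r]).
    assert (W : forall x y, t - Rmin d0 t < x < t -> t - Rmin d0 t < y < t -> x <= y ->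
              Rabs (Lambda a phi x - Lambda a phi y) < eps).
    { intros x y Hx Hy Hxy. rewrite !Lambda_eq.
      assert (Rabs (Xi a phi y - Xi a phi x) <= eps/2).
      { eapply keyL; eauto; try lra. intros u Hu. pose proof (Hd u ltac:(lra)).
        pose proof (Hd x ltac:(lra)). rabs. }
      pose proof (Hd x ltac:(lra)). pose proof (Hd y ltac:(lra)). rabs. }
    intros x y Hx Hy. destruct (Rle_dec x y). auto.
    rewrite Rabs_minus_sym. apply W; auto; lra.
Qed.

Lemma cont_cadlag phi : cont0 phi -> cadlag phi.
Proof.
  intros H. split.
  - intros t Ht eps Heps. destruct (H t Ht eps Heps) as [d [d0 Hd]]. exists d; split; auto.
    intros s Hs. apply Hd; rabs.
  - intros t Ht. exists (phi t). intros eps Heps. destruct (H t ltac:(lra) eps Heps) as [d [d0 Hd]].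
    exists (Rmin d t). split. { unfold Rmin; destruct Rle_dec; lra. }
    assert (Rmin d t <= d /\ Rmin d t <= t) by (split; [apply Rmin_l|apply Rmin_r]).
    intros s Hs. apply Hd; rabs.
Qed.

Lemma Lam_cont a phi : 0 < a -> cont0 phi -> cont0 (Lambda a phi).
Proof.
  intros ha H. pose proof (cont_cadlag _ H) as Hc.
  intros t Ht eps Heps. destruct (H t Ht (eps/4) ltac:(lra)) as [d [d0 Hd]].
  destruct (cadlag_bnd phi (t + d) Hc ltac:(lra)) as [M HM].
  exists d; split; auto. intros s Hs Hst. rewrite !Lambda_eq.
  pose proof (Hd s Hs Hst).
  assert (s < t + d) by rabs.
  destruct (Rle_dec t s).
  - assert (Rabs (Xi a phi s - Xi a phi t) <= eps/4).
    { eapply keyL; eauto; try lra. intros u Hu. left. apply Hd; rabs. }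
    rabs.
  - assert (Rabs (Xi a phi t - Xi a phi s) <= eps/2).
    { eapply keyL; eauto; try lra. intros u Hu. pose proof (Hd u ltac:(lra) ltac:(rabs)). rabs. }
    rabs.
Qed.

Lemma fsum_le g h n : (forall i, (i < n)%nat -> g i <= h i) -> fsum g n <= fsum h n.
Proof. induction n; intros H; simpl. lra. pose proof (H n ltac:(lia)). assert (fsum g n <= fsum h n) by (apply IHn; intros; apply H; lia). lra. Qed.

Lemma fsum_plus g h n : fsum (fun i => g i + h i) n = fsum g n + fsum h n.
Proof. induction n; simpl. lra. rewrite IHn; lra. Qed.

Lemma fsum_const c n : fsum (fun _ => c) n = INR n * c.
Proof. induction n; simpl fsum. simpl; lra. rewrite IHn, S_INR; lra. Qed.

Lemma var_fsum f x n : var_sum f x n = fsum (fun i => Rabs (f (x (S i)) - f (x i))) n.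
Proof. induction n; simpl. reflexivity. rewrite IHn; reflexivity. Qed.

Lemma nfrac n c : 0 <= c -> INR n * (c / (INR n + 1)) <= c.
Proof.
  intros Hc. pose proof (pos_INR n).
  assert (INR n * (c / (INR n + 1)) = c - c / (INR n + 1)) by (field; lra).
  assert (0 <= c / (INR n + 1)) by (unfold Rdiv; apply Rmult_le_pos; [lra| left; apply Rinv_0_lt_compat; lra]).
  lra.
Qed.

Lemma Xi_sum a phi T M (lo hi : nat -> R) n eta : 0 < a -> bnd phi T M -> 0 < eta ->
  (forall i, (i < n)%nat -> 0 <= lo i /\ lo i <= hi i /\ hi i <= T) ->
  exists u : nat -> R, (forall i, (i < n)%nat -> lo i <= u i <= hi i) /\
    fsum (fun i => Rabs (Xi a phi (hi i) - Xi a phi (lo i))) n <=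
    fsum (fun i => Rabs (phi (u i) - phi (lo i))) n + INR n * eta.
Proof.
  intros ha HB He Hi.
  assert (Hc : forall i, exists v, (i < n)%nat -> lo i <= v <= hi i /\
     Rabs (Xi a phi (hi i) - Xi a phi (lo i)) <= Rabs (phi v - phi (lo i)) + eta).
  { intros i. destruct (Compare_dec.lt_dec i n) as [Hl|Hl]; [|exists 0; intros; lia].
    destruct (Hi i Hl) as [H1 [H2 H3]].
    destruct (classic (exists v, lo i <= v <= hi i /\
        Rabs (phi v - phi (lo i)) > Rabs (Xi a phi (hi i) - Xi a phi (lo i)) - eta)) as [[v [Hv Hv2]]|Hn].
    - exists v; intros; split; [auto|lra].
    - exfalso.
      assert (Rabs (Xi a phi (hi i) - Xi a phi (lo i)) <= Rabs (Xi a phi (hi i) - Xi a phi (lo i)) - eta); [|lra].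
      eapply keyL; eauto. intros u Hu. apply Rnot_gt_le. intro. apply Hn. exists u; auto. }
  destruct (choice _ Hc) as [u Hu]. exists u. split.
  - intros i Hl; apply (Hu i Hl).
  - rewrite <- fsum_const, <- fsum_plus. apply fsum_le. intros i Hl; apply (Hu i Hl).
Qed.

Definition ilv (x u : nat -> R) (k : nat) := if Nat.even k then x (Nat.div2 k) else u (Nat.div2 k).

Lemma ilv_even x u i : ilv x u (2 * i) = x i.
Proof. unfold ilv. rewrite Nat.even_mul, Nat.div2_double. reflexivity. Qed.
Lemma ilv_odd x u i : ilv x u (S (2 * i)) = u i.
Proof. unfold ilv. rewrite Nat.even_succ, Nat.odd_mul, Nat.div2_succ_double. reflexivity. Qed.

Lemma ilv_var f x u n : var_sum f (ilv x u) (2 * n) =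
  fsum (fun i => Rabs (f (u i) - f (x i)) + Rabs (f (x (S i)) - f (u i))) n.
Proof.
  induction n. reflexivity.
  replace (2 * S n)%nat with (S (S (2 * n))) by lia. change (var_sum f (ilv x u) (S (S (2 * n)))) with (var_sum f (ilv x u) (2 * n) + Rabs (f (ilv x u (S (2*n))) - f (ilv x u (2*n))) + Rabs (f (ilv x u (S (S (2*n)))) - f (ilv x u (S (2*n))))). cbn [fsum].
  rewrite IHn. replace (S (S (2 * n))) with (2 * S n)%nat by lia.
  rewrite !ilv_even, ilv_odd. lra.
Qed.

Lemma ilv_mono x u n : (forall i, (i < n)%nat -> x i <= u i <= x (S i)) ->
  forall k, (k < 2 * n)%nat -> ilv x u k <= ilv x u (S k).
Proof.
  intros H k Hk. destruct (Nat.Even_or_Odd k) as [[i ->]|[i ->]].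
  - rewrite ilv_odd, ilv_even. apply H; lia.
  - replace (2 * i + 1)%nat with (S (2 * i)) by lia.
    replace (S (S (2 * i))) with (2 * S i)%nat by lia.
    rewrite ilv_odd, ilv_even. apply H; lia.
Qed.

Lemma mono_le x n : (forall i, (i < n)%nat -> x i <= x (S i)) ->
  forall j, (j <= n)%nat -> forall i, (i <= j)%nat -> x i <= x j.
Proof.
  intros H j. induction j; intros Hj i Hi.
  - replace i with O by lia; lra.
  - destruct (Nat.eq_dec i (S j)) as [->|]; [lra|].
    pose proof (IHj ltac:(lia) i ltac:(lia)). pose proof (H j ltac:(lia)). lra.
Qed.

Lemma Lam_BV a phi : 0 < a -> BV0 phi -> BV0 (Lambda a phi).
Proof.
  intros ha [Hc Hb]. split. apply Lam_cadlag; auto.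
  intros T HT. destruct (Hb T HT) as [M HM]. destruct (cadlag_bnd phi T Hc HT) as [B HB].
  exists (2 * M + 1). intros x n Hx0 Hmon HxT.
  assert (Hx : forall i, (i <= n)%nat -> 0 <= x i <= T).
  { intros i Hi. pose proof (mono_le x n Hmon i Hi O ltac:(lia)).
    pose proof (mono_le x n Hmon n ltac:(lia) i Hi). lra. }
  set (eta := 1 / (INR n + 1)).
  assert (eta0 : 0 < eta) by (unfold eta, Rdiv; pose proof (pos_INR n);
     apply Rmult_lt_0_compat; [lra|apply Rinv_0_lt_compat; lra]).
  destruct (Xi_sum a phi T B x (fun i => x (S i)) n eta ha HB eta0) as [u [Hu Hs]].
  { intros i Hi. pose proof (Hx i ltac:(lia)). pose proof (Hx (S i) ltac:(lia)). pose proof (Hmon i Hi). lra. }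
  assert (Hy : var_sum phi (ilv x u) (2 * n) <= M).
  { apply HM.
    - replace O with (2 * 0)%nat by lia. rewrite ilv_even. auto.
    - apply ilv_mono. intros i Hi. apply Hu; auto.
    - rewrite ilv_even; auto. }
  rewrite ilv_var in Hy.
  assert (H1 : fsum (fun i => Rabs (phi (u i) - phi (x i))) n <= M).
  { eapply Rle_trans; [|exact Hy]. apply fsum_le. intros. pose proof (Rabs_pos (phi (x (S i)) - phi (u i))). lra. }
  pose proof (HM x n Hx0 Hmon HxT) as H2.
  pose proof (nfrac n 1 ltac:(lra)) as H3. fold eta in H3.
  rewrite !var_fsum in *.
  assert (fsum (fun i => Rabs (Lambda a phi (x (S i)) - Lambda a phi (x i))) n <=
     fsum (fun i => Rabs (phi (x (S i)) - phi (x i)) + Rabs (Xi a phi (x (S i)) - Xi a phi (x i))) n).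
  { apply fsum_le. intros i _. rewrite !Lambda_eq. rabs. }
  rewrite fsum_plus in H. lra.
Qed.

Lemma ac_cont phi : ac_loc phi -> cont0 phi.
Proof.
  intros H t Ht eps Heps. destruct (H (t + 1) ltac:(lra) eps Heps) as [d [d0 Hd]].
  exists (Rmin d 1). split. { unfold Rmin; destruct Rle_dec; lra. }
  assert (Rmin d 1 <= d /\ Rmin d 1 <= 1) by (split; [apply Rmin_l|apply Rmin_r]).
  intros s Hs Hst. destruct (Rle_dec t s).
  - pose proof (Hd (fun _ => t) (fun _ => s) 1%nat) as K. simpl in K.
    assert (0 + Rabs (phi s - phi t) < eps); [|lra]. apply K.
    + intros; rabs. + intros; lia. + rabs.
  - pose proof (Hd (fun _ => s) (fun _ => t) 1%nat) as K. simpl in K.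
    rewrite Rabs_minus_sym.
    assert (0 + Rabs (phi t - phi s) < eps); [|lra]. apply K.
    + intros; rabs. + intros; lia. + rabs.
Qed.

Lemma Lam_AC a phi : 0 < a -> ac_loc phi -> ac_loc (Lambda a phi).
Proof.
  intros ha H. pose proof (cont_cadlag _ (ac_cont _ H)) as Hc.
  intros T HT eps Heps. destruct (H T HT (eps/4) ltac:(lra)) as [d [d0 Hd]].
  destruct (cadlag_bnd phi T Hc HT) as [B HB].
  exists d; split; auto. intros lo hi n H1 H2 H3.
  set (eta := (eps/4) / (INR n + 1)).
  assert (eta0 : 0 < eta) by (unfold eta, Rdiv; pose proof (pos_INR n);
     apply Rmult_lt_0_compat; [lra|apply Rinv_0_lt_compat; lra]).
  destruct (Xi_sum a phi T B lo hi n eta ha HB eta0 H1) as [u [Hu Hs]].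
  pose proof (Hd lo hi n H1 H2 H3) as K1.
  assert (K2 : fsum (fun i => Rabs (phi (u i) - phi (lo i))) n < eps/4).
  { apply Hd.
    - intros i Hi. pose proof (H1 i Hi). pose proof (Hu i Hi). lra.
    - intros i Hi. pose proof (Hu i ltac:(lia)). pose proof (H2 i Hi). lra.
    - eapply Rle_lt_trans; [|exact H3]. apply fsum_le. intros i Hi. pose proof (Hu i Hi). lra. }
  pose proof (nfrac n (eps/4) ltac:(lra)) as K3. fold eta in K3.
  assert (fsum (fun i => Rabs (Lambda a phi (hi i) - Lambda a phi (lo i))) n <=
     fsum (fun i => Rabs (phi (hi i) - phi (lo i)) + Rabs (Xi a phi (hi i) - Xi a phi (lo i))) n).
  { apply fsum_le. intros i _. rewrite !Lambda_eq. rabs. }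
  rewrite fsum_plus in H0. lra.
Qed.

Theorem proposition1p3 (a : R) (ha : 0 < a) :
  (forall phi, cadlag phi -> cadlag (Lambda a phi)) /\
  (forall phi, cont0 phi -> cont0 (Lambda a phi)) /\
  (forall phi, BV0 phi -> BV0 (Lambda a phi)) /\
  (forall phi, ac_loc phi -> ac_loc (Lambda a phi)).
Proof.
  split; [|split; [|split]]; intros phi Hp.
  - apply Lam_cadlag; auto.
  - apply Lam_cont; auto.
  - apply Lam_BV; auto.
  - apply Lam_AC; auto.
Qed.
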